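(* Let $(A,B)$ be in canonical form with index set $\mathcal I=\{k_1,\dots,k_m\}$ and controllability index $p$, and let the costs $f_t,g_t$ satisfy the standing assumptions. Define $C:\mathbb R^{mN}\to\mathbb R$ as in the context. Then: (i) $C$ is $\mu_f$-strongly convex and $l_c$-smooth with $l_c=p\,l_f+(p+1)\,l_g\,\|[I_m,\,-A(\mathcal I,:)]\|^2$. (ii) For every $(\mathbf x,\mathbf u)$ with $x_0=0$ and $x_{t+1}=Ax_t+Bu_t$ for $0\le t\le N-1$, setting $z_t=x_t^{\mathcal I}$ ($1\le t\le N$) gives $x_t(\mathbf z)=x_t$, $u_t(\mathbf z)=u_t$ and $C(\mathbf z)=J(\mathbf x,\mathbf u)$. Conversely, for every $\mathbf z\in\mathbb R^{mN}$, the pair $(\mathbf x(\mathbf z),\mathbf u(\mathbf z))$ satisfies $x_{t+1}(\mathbf z)=Ax_t(\mathbf z)+Bu_t(\mathbf z)$, $x_0(\mathbf z)=0$, and $J(\mathbf x(\mathbf z),\mathbf u(\mathbf z))=C(\mathbf z)$. (iii) For each $t$, the stage term $f_t(x_t(\mathbf z))+g_t(u_t(\mathbf z))$ depends only on $z_{t-p+1},\dots,z_{t+1}$.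
   Context: Canonical form: $A\in\mathbb R^{n\times n}$, $B\in\mathbb R^{n\times m}$ are in canonical form if there are indices $0=k_0<k_1<\dots<k_m=n$ such that, with $\mathcal I=\{k_1,\dots,k_m\}$ and $e_i$ the standard basis of $\mathbb R^n$: for every $i\notin\mathcal I$ the $i$-th row of $A$ equals $e_{i+1}^\top$; the rows of $A$ indexed by $\mathcal I$ are arbitrary; the $j$-th column of $B$ is $e_{k_j}$. Put $p_i=k_i-k_{i-1}$ and $p=\max_i p_i$ (the controllability index). $A(\mathcal I,:)\in\mathbb R^{m\times n}$ is the matrix formed by rows $k_1,\dots,k_m$ of $A$; for $x\in\mathbb R^n$, $x^{\mathcal I}=(x^{k_1},\dots,x^{k_m})^\top$; $x^i$ is the $i$-th entry. Problem: dynamics $x_{t+1}=Ax_t+Bu_t$ ($0\le t\le N-1$), $x_0=0$; cost $J(\mathbf x,\mathbf u)=\sum_{t=0}^{N-1}[f_t(x_t)+g_t(u_t)]+f_N(x_N)$, $\mathbf x=(x_1,\dots,x_N)$, $\mathbf u=(u_0,\dots,u_{N-1})$. Standing assumptions: each $f_t:\mathbb R^n\to\mathbb R$ ($0\le t\le N$) is $\mu_f$-strongly convex and $l_f$-smooth (gradient $l_f$-Lipschitz); each $g_t:\mathbb R^m\to\mathbb R$ ($0\le t\le N-1$) is convex and $l_g$-smooth; $\mu_f,l_f,l_g>0$; the minimizers $\theta_t=\arg\min f_t$, $\xi_t=\arg\min g_t$ satisfy $\|\theta_t\|\le\bar\theta$, $\|\xi_t\|\le\bar\xi$. Reparametrization: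 for $\mathbf z=(z_1,\dots,z_N)\in\mathbb R^{mN}$ ($z_t\in\mathbb R^m$, with convention $z_t=0$ for $t\le 0$), set $x_t(\mathbf z)=(z^1_{t-p_1+1},\dots,z^1_t,\ z^2_{t-p_2+1},\dots,z^2_t,\ \dots,\ z^m_{t-p_m+1},\dots,z^m_t)^\top$ for $0\le t\le N$, $u_t(\mathbf z)=z_{t+1}-A(\mathcal I,:)x_t(\mathbf z)$ for $0\le t\le N-1$, and $C(\mathbf z)=\sum_{t=0}^{N}f_t(x_t(\mathbf z))+\sum_{t=0}^{N-1}g_t(u_t(\mathbf z))$. *)

(* Defs.v *)
From Stdlib Require Import Reals.
From mathcomp Require Import all_boot.
Set Implicit Arguments. Unset Strict Implicit. Unset Printing Implicit Defensive.
Open Scope R_scope.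

Definition vadd (I : Type) (x y : I -> R) : I -> R := fun i => x i + y i.
Definition vsub (I : Type) (x y : I -> R) : I -> R := fun i => x i - y i.
Definition vscale (I : Type) (a : R) (x : I -> R) : I -> R := fun i => a * x i.
Definition vdot (I : finType) (x y : I -> R) : R := \big[Rplus/0]_(i : I) (x i * y i).
Definition vnorm (I : finType) (x : I -> R) : R := sqrt (vdot x x).
Definition mv (I J : finType) (M : I -> J -> R) (v : J -> R) : I -> R :=
  fun i => \big[Rplus/0]_(j : J) (M i j * v j).

Definition has_gradient (I : finType) (f : (I -> R) -> R) (x g : I -> R) : Prop :=
  forall eps, 0 < eps -> exists delta, 0 < delta /\
    forall h : I -> R, vnorm h < delta ->
      Rabs (f (vadd x h) - f x - vdot g h) <= eps * vnorm h.

Definition smooth (I : finType) (l : R) (f : (I -> R) -> R) : Prop :=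
  exists grad : (I -> R) -> (I -> R),
    (forall x, has_gradient f x (grad x)) /\
    (forall x y, vnorm (vsub (grad x) (grad y)) <= l * vnorm (vsub x y)).

Definition strongly_convex (I : finType) (mu : R) (f : (I -> R) -> R) : Prop :=
  forall (x y : I -> R) (a : R), 0 <= a <= 1 ->
    f (vadd (vscale a x) (vscale (1 - a) y))
      <= a * f x + (1 - a) * f y - mu / 2 * a * (1 - a) * (vnorm (vsub x y)) ^ 2.

Definition convex (I : finType) (f : (I -> R) -> R) : Prop := strongly_convex 0 f.

Definition is_opnorm (I J : finType) (M : I -> J -> R) (c : R) : Prop :=
  is_lub (fun r => exists v : J -> R, vnorm v <= 1 /\ r = vnorm (mv M v)) c.

Definition vat (n : nat) (v : 'I_n -> R) (r : nat) : R :=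
  match (insub r : option 'I_n) with Some r' => v r' | None => 0 end.

(* ---------- Canonical form ----------
   Conventions: k : nat -> nat gives k_0, ..., k_m (1-based row indices as in
   the paper).  Vectors/matrices are indexed 0-based by ordinals, so paper row
   i (1-based) is ordinal i-1.  Index set I = {k_1,...,k_m}. *)

Definition in_I (m : nat) (k : nat -> nat) (r : nat) : bool :=
  has (fun j => k j == r.+1) (iota 1 m).

Definition canonical_form (n m : nat) (k : nat -> nat)
    (A : 'I_n -> 'I_n -> R) (B : 'I_n -> 'I_m -> R) : Prop :=
  [/\ k 0%N = 0%N,
      (forall j, (j < m)%N -> (k j < k j.+1)%N),
      k m = n,
      (forall r c : 'I_n, ~~ in_I m k r ->
          A r c = if (nat_of_ord c == (nat_of_ord r).+1)%N then 1 else 0)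
    &
      (forall (r : 'I_n) (j : 'I_m),
          B r j = if ((nat_of_ord r).+1 == k (nat_of_ord j).+1)%N then 1 else 0)].

Definition pidx (k : nat -> nat) (i : nat) : nat := (k i - k i.-1)%N.
Definition ctrl_index (m : nat) (k : nat -> nat) : nat :=
  \max_(j < m) pidx k j.+1.

Definition restrI (n m : nat) (k : nat -> nat) (x : 'I_n -> R) : 'I_m -> R :=
  fun j => vat x (k (nat_of_ord j).+1).-1.

Definition AI (n m : nat) (k : nat -> nat) (A : 'I_n -> 'I_n -> R) : 'I_m -> 'I_n -> R :=
  fun j c => vat (fun r => A r c) (k (nat_of_ord j).+1).-1.

Definition MIA (n m : nat) (k : nat -> nat) (A : 'I_n -> 'I_n -> R) :
    'I_m -> ('I_m + 'I_n)%type -> R :=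
  fun j c => match c with
             | inl j' => if j == j' then 1 else 0
             | inr c' => - AI k A j c'
             end.

(* ---------- Reparametrization ----------
   z in R^{mN} is represented as z : 'I_N * 'I_m -> R, z (t-1, j-1) = z_t^j. *)

(* z_tau^{j+1} (j 0-based), with z_tau = 0 for tau <= 0 (and out of range) *)
Definition zval (N m : nat) (z : 'I_N * 'I_m -> R) (tau j : nat) : R :=
  match (insub tau.-1 : option 'I_N), (insub j : option 'I_m) with
  | Some a, Some b => if (0 < tau)%N then z (a, b) else 0
  | _, _ => 0
  end.

Definition blk (m : nat) (k : nat -> nat) (r : nat) : nat :=
  find (fun j => (r < k j.+1)%N) (iota 0 m).

(* x_t(z): 0-based row r lies in block j (0-based), i.e. paper rows
   k_j+1..k_{j+1}; position s = r - k_j (0-based) holds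
   z^{j+1}_{t - p_{j+1} + 1 + s} = z^{j+1}_{t + r + 1 - k_{j+1}}. *)
Definition xz (n m N : nat) (k : nat -> nat) (z : 'I_N * 'I_m -> R) (t : nat) : 'I_n -> R :=
  fun r => let j := blk m k r in
           zval z (t + (nat_of_ord r).+1 - k j.+1)%N j.

Definition uz (n m N : nat) (k : nat -> nat) (A : 'I_n -> 'I_n -> R)
    (z : 'I_N * 'I_m -> R) (t : nat) : 'I_m -> R :=
  fun j => zval z t.+1 j - mv (AI k A) (xz k z t) j.

Definition Ccost (n m N : nat) (k : nat -> nat) (A : 'I_n -> 'I_n -> R)
    (f : nat -> ('I_n -> R) -> R) (g : nat -> ('I_m -> R) -> R)
    (z : 'I_N * 'I_m -> R) : R :=
  \big[Rplus/0]_(0 <= t < N.+1) f t (xz k z t)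
  + \big[Rplus/0]_(0 <= t < N) g t (uz k A z t).

Definition Jcost (n m N : nat)
    (f : nat -> ('I_n -> R) -> R) (g : nat -> ('I_m -> R) -> R)
    (x : nat -> 'I_n -> R) (u : nat -> 'I_m -> R) : R :=
  \big[Rplus/0]_(0 <= t < N) (f t (x t) + g t (u t)) + f N (x N).

Definition zI (n m N : nat) (k : nat -> nat) (x : nat -> 'I_n -> R) : 'I_N * 'I_m -> R :=
  fun tj => restrI k (x (nat_of_ord tj.1).+1) tj.2.

(* Main.v *)
From HB Require Import structures.
Require Import Defs.
From Stdlib Require Import Reals Lra Lia FunctionalExtensionality ClassicalEpsilon.
From mathcomp Require Import all_boot zify.
Open Scope R_scope.
Set Implicit Arguments. Unset Strict Implicit.

Lemma RplusA' : associative Rplus. Proof. move=> *; ring. Qed.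
Lemma RmultA' : associative Rmult. Proof. move=> *; ring. Qed.
HB.instance Definition _ := Monoid.isComLaw.Build R 0 Rplus RplusA' Rplus_comm Rplus_0_l.
HB.instance Definition _ := Monoid.isComLaw.Build R 1 Rmult RmultA' Rmult_comm Rmult_1_l.
HB.instance Definition _ := Monoid.isMulLaw.Build R 0 Rmult Rmult_0_l Rmult_0_r.
HB.instance Definition _ := Monoid.isAddLaw.Build R Rmult Rplus Rmult_plus_distr_r Rmult_plus_distr_l.

Lemma sumR_le (I : Type) (r : seq I) (P : pred I) (F G : I -> R) :
  (forall i, P i -> F i <= G i) ->
  \big[Rplus/0]_(i <- r | P i) F i <= \big[Rplus/0]_(i <- r | P i) G i.
Proof. move=> H; apply: (big_ind2 (fun a b => a <= b)) => //; [lra|]. move=> *; lra. Qed.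

Lemma sumR_ge0 (I : Type) (r : seq I) (P : pred I) (F : I -> R) :
  (forall i, P i -> 0 <= F i) -> 0 <= \big[Rplus/0]_(i <- r | P i) F i.
Proof. move=> H; apply: (big_ind (fun a => 0 <= a)) => //; [lra|]. move=> *; lra. Qed.

Lemma sumR_opp (I : Type) (r : seq I) (P : pred I) (F : I -> R) :
  \big[Rplus/0]_(i <- r | P i) (- F i) = - \big[Rplus/0]_(i <- r | P i) F i.
Proof. apply: (big_ind2 (fun a b => a = - b)) => //; [lra|]. move=> *; lra. Qed.

Lemma sumR_sub (I : Type) (r : seq I) (P : pred I) (F G : I -> R) :
  \big[Rplus/0]_(i <- r | P i) (F i - G i) =
  \big[Rplus/0]_(i <- r | P i) F i - \big[Rplus/0]_(i <- r | P i) G i.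
Proof. rewrite /Rminus big_split sumR_opp //. Qed.

Lemma sumR_pred1 (I : finType) (z : I -> R) (x : I) :
  \big[Rplus/0]_c (z c * (if c == x then 1 else 0)) = z x.
Proof.
rewrite (bigD1 x) //= eqxx big1 ?Rplus_0_r ?Rmult_1_r //.
by move=> i /negbTE ->; rewrite Rmult_0_r.
Qed.

Lemma sumR_pred1' (I : finType) (z : I -> R) (x : I) :
  \big[Rplus/0]_c ((if x == c then 1 else 0) * z c) = z x.
Proof.
rewrite -[RHS](sumR_pred1 z x); apply: eq_bigr => c _.
by rewrite eq_sym Rmult_comm.
Qed.

Lemma vdotC (I : finType) (x y : I -> R) : vdot x y = vdot y x.
Proof. by apply: eq_bigr => i _; rewrite Rmult_comm. Qed.

Lemma vdot_ge0 (I : finType) (x : I -> R) : 0 <= vdot x x.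
Proof. apply: sumR_ge0 => i _; nra. Qed.

Lemma vnorm_ge0 (I : finType) (x : I -> R) : 0 <= vnorm x.
Proof. exact: sqrt_pos. Qed.

Lemma vnorm_sq (I : finType) (x : I -> R) : vnorm x ^ 2 = vdot x x.
Proof. rewrite /vnorm /= Rmult_1_r sqrt_sqrt //; exact: vdot_ge0. Qed.

Lemma vnorm_sq' (I : finType) (x : I -> R) : vnorm x * vnorm x = vdot x x.
Proof. rewrite -vnorm_sq /=; ring. Qed.

Lemma CS2 (I : finType) (x y : I -> R) : vdot x y ^ 2 <= vdot x x * vdot y y.
Proof.
set a := vdot y y; set b := vdot x y; set c := vdot x x.
have Q : forall t, 0 <= c + 2 * t * b + t ^ 2 * a.
  move=> t.
  have -> : c + 2 * t * b + t ^ 2 * a = vdot (fun i => x i + t * y i) (fun i => x i + t * y i).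
    rewrite /c /b /a /vdot !big_distrr -!big_split /=.
    by apply: eq_bigr => i _; ring.
  exact: vdot_ge0.
have a0 : 0 <= a by exact: vdot_ge0.
have c0 : 0 <= c by exact: vdot_ge0.
case: (Req_dec a 0) => Ha.
  case: (Req_dec b 0) => Hb.
    rewrite Hb Ha; lra.
  have := Q (- (c + 1) / (2 * b)); rewrite Ha.
  have -> : c + 2 * (- (c + 1) / (2 * b)) * b + (- (c + 1) / (2 * b)) ^ 2 * 0 = -1.
    field; auto.
  lra.
have := Q (- b / a).
have -> : c + 2 * (- b / a) * b + (- b / a) ^ 2 * a = (c * a - b ^ 2) / a by field.
move=> H.
have apos : 0 < a by lra.
have : 0 <= (c * a - b ^ 2) / a * a by apply: Rmult_le_pos; lra.
have -> : (c * a - b ^ 2) / a * a = c * a - b ^ 2 by field; lra.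
lra.
Qed.

Lemma CS (I : finType) (x y : I -> R) : Rabs (vdot x y) <= vnorm x * vnorm y.
Proof.
rewrite /vnorm -sqrt_mult; try exact: vdot_ge0.
rewrite -sqrt_Rsqr_abs; apply: sqrt_le_1_alt.
rewrite /Rsqr; have := CS2 x y; simpl; lra.
Qed.

Lemma CS' (I : finType) (x y : I -> R) : vdot x y <= vnorm x * vnorm y.
Proof. have := CS x y; have := Rle_abs (vdot x y); lra. Qed.


Definition mvT (I J : finType) (M : I -> J -> R) (g : I -> R) : J -> R :=
  fun j => \big[Rplus/0]_(i : I) (M i j * g i).

Lemma vdot_mv (I J : finType) (M : I -> J -> R) g h :
  vdot g (mv M h) = vdot (mvT M g) h.
Proof.
rewrite /vdot /mv /mvT.
under eq_bigr do rewrite big_distrr.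
under [RHS]eq_bigr do rewrite big_distrl.
rewrite exchange_big /=; apply: eq_bigr => j _; apply: eq_bigr => i _ /=; ring.
Qed.

Lemma mv_lin (I J : finType) (M : I -> J -> R) a b x y :
  mv M (vadd (vscale a x) (vscale b y)) = vadd (vscale a (mv M x)) (vscale b (mv M y)).
Proof.
apply: functional_extensionality => i; rewrite /mv /vadd /vscale !big_distrr -big_split.
by apply: eq_bigr => j _; rewrite /=; ring.
Qed.

Lemma mv_add (I J : finType) (M : I -> J -> R) x y :
  mv M (vadd x y) = vadd (mv M x) (mv M y).
Proof.
apply: functional_extensionality => i; rewrite /mv /vadd -big_split.
by apply: eq_bigr => j _; rewrite /=; ring.
Qed.

Lemma mv_sub (I J : finType) (M : I -> J -> R) x y :
  mv M (vsub x y) = vsub (mv M x) (mv M y).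
Proof.
apply: functional_extensionality => i; rewrite /mv /vsub -sumR_sub.
by apply: eq_bigr => j _; rewrite /=; ring.
Qed.

Lemma vdot_addl (I : finType) (x y z : I -> R) : vdot (vadd x y) z = vdot x z + vdot y z.
Proof. rewrite /vdot -big_split; apply: eq_bigr => i _ /=; rewrite /vadd; ring. Qed.

Lemma vdot_subl (I : finType) (x y z : I -> R) : vdot (vsub x y) z = vdot x z - vdot y z.
Proof. rewrite /vdot -sumR_sub; apply: eq_bigr => i _ /=; rewrite /vsub; ring. Qed.

Lemma sq_le (a b : R) : 0 <= a -> 0 <= b -> a * a <= b * b -> a <= b.
Proof. move=> *; nra. Qed.

Lemma mv_bound (I J : finType) (M : I -> J -> R) :
  exists c, 0 <= c /\ forall h, vnorm (mv M h) <= c * vnorm h.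
Proof.
exists (sqrt (\big[Rplus/0]_i vdot (M i) (M i))); split; first exact: sqrt_pos.
move=> h; apply: sq_le; [exact: vnorm_ge0| apply: Rmult_le_pos; [exact: sqrt_pos|exact: vnorm_ge0]|].
have S0 : 0 <= \big[Rplus/0]_i vdot (M i) (M i) by apply: sumR_ge0 => i _; exact: vdot_ge0.
have -> : sqrt (\big[Rplus/0]_i vdot (M i) (M i)) * vnorm h *
   (sqrt (\big[Rplus/0]_i vdot (M i) (M i)) * vnorm h) =
   (\big[Rplus/0]_i vdot (M i) (M i)) * vdot h h.
  rewrite -vnorm_sq' -{3}(sqrt_sqrt _ S0); ring.
rewrite vnorm_sq' /vdot big_distrl /=; apply: sumR_le => i _.
have := CS2 (M i) h; rewrite /vdot /mv /=; lra.
Qed.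

Lemma hg_ext (I : finType) (f1 f2 : (I -> R) -> R) x (g1 g2 : I -> R) :
  (forall y, f1 y = f2 y) -> (forall i, g1 i = g2 i) ->
  has_gradient f1 x g1 -> has_gradient f2 x g2.
Proof.
move=> E1 E2; have -> : f1 = f2 by apply: functional_extensionality.
by have -> : g1 = g2 by apply: functional_extensionality.
Qed.

Lemma hg_add (I : finType) (f1 f2 : (I -> R) -> R) x (g1 g2 : I -> R) :
  has_gradient f1 x g1 -> has_gradient f2 x g2 ->
  has_gradient (fun y => f1 y + f2 y) x (vadd g1 g2).
Proof.
move=> H1 H2 eps He.
have [d1 [d1p Hd1]] := H1 (eps / 2) ltac:(lra).
have [d2 [d2p Hd2]] := H2 (eps / 2) ltac:(lra).
exists (Rmin d1 d2); split; first exact: Rmin_glb_lt.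
move=> h Hh.
have := Hd1 h (Rlt_le_trans _ _ _ Hh (Rmin_l _ _)).
have := Hd2 h (Rlt_le_trans _ _ _ Hh (Rmin_r _ _)).
rewrite vdot_addl.
set a := f1 (vadd x h) - f1 x - vdot g1 h.
set b := f2 (vadd x h) - f2 x - vdot g2 h.
have -> : f1 (vadd x h) + f2 (vadd x h) - (f1 x + f2 x) - (vdot g1 h + vdot g2 h) = a + b.
  rewrite /a /b; ring.
move=> Hb Ha; have := Rabs_triang a b; lra.
Qed.

Lemma hg_0 (I : finType) (x : I -> R) : has_gradient (fun _ => 0) x (fun _ => 0).
Proof.
move=> eps He; exists 1; split; first lra.
move=> h _; have -> : vdot (fun _ : I => 0) h = 0.
  by rewrite /vdot big1 // => i _; rewrite Rmult_0_l.
rewrite Rminus_0_r Rminus_0_r Rabs_R0; apply: Rmult_le_pos; [lra|exact: vnorm_ge0].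
Qed.

Lemma hg_sum (I : finType) (F : nat -> (I -> R) -> R) (G : nat -> I -> R) x b :
  (forall t, (t < b)%N -> has_gradient (F t) x (G t)) ->
  has_gradient (fun y => \big[Rplus/0]_(0 <= t < b) F t y) x
               (fun i => \big[Rplus/0]_(0 <= t < b) G t i).
Proof.
elim: b => [|b IH] H.
  apply: (hg_ext (f1 := fun _ => 0) (g1 := fun _ => 0)) => [y|i|]; rewrite ?big_geq //.
  exact: hg_0.
apply: (hg_ext (f1 := fun y => \big[Rplus/0]_(0 <= t < b) F t y + F b y)
               (g1 := vadd (fun i => \big[Rplus/0]_(0 <= t < b) G t i) (G b))).
- by move=> y; rewrite big_nat_recr.
- by move=> i; rewrite big_nat_recr.
apply: hg_add; first by apply: IH => t Ht; apply: H; lia.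
by apply: H.
Qed.

Lemma hg_comp (I J : finType) (M : I -> J -> R) (f : (I -> R) -> R) z g :
  has_gradient f (mv M z) g -> has_gradient (fun y => f (mv M y)) z (mvT M g).
Proof.
move=> H eps He.
have [c [c0 Hc]] := mv_bound M.
have [d [dp Hd]] := H (eps / (c + 1)) ltac:(apply: Rdiv_lt_0_compat; lra).
exists (d / (c + 1)); split; first by apply: Rdiv_lt_0_compat; lra.
move=> h Hh.
have nh0 := vnorm_ge0 h.
have Hmh : vnorm (mv M h) < d.
  have := Hc h.
  have : (c + 1) * vnorm h < d.
    have -> : d = (c + 1) * (d / (c + 1)) by field; lra.
    apply: Rmult_lt_compat_l; lra.
  nra.
have := Hd _ Hmh; rewrite mv_add -vdot_mv => H1.
apply: Rle_trans; first exact: H1.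
have := Hc h.
have := vnorm_ge0 (mv M h) => H2 H3.
have -> : eps * vnorm h = eps / (c + 1) * ((c + 1) * vnorm h) by field; lra.
apply: Rmult_le_compat_l; first by apply: Rlt_le; apply: Rdiv_lt_0_compat; lra.
lra.
Qed.


Lemma zval_0 (N m : nat) (z : 'I_N * 'I_m -> R) j : zval z 0 j = 0.
Proof. by unfold zval; destruct (insub (0.-1) : option 'I_N), (insub j : option 'I_m). Qed.

Lemma zval_big (N m : nat) (z : 'I_N * 'I_m -> R) tau j : (N < tau)%N -> zval z tau j = 0.
Proof. move=> H; rewrite /zval insubF //; apply/negbTE; rewrite -leqNgt; lia. Qed.

Lemma zval_ord (N m : nat) (z : 'I_N * 'I_m -> R) (a : 'I_N) (b : 'I_m) :
  zval z (nat_of_ord a).+1 (nat_of_ord b) = z (a, b).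
Proof. by rewrite /zval /= !valK. Qed.

Lemma kmono (m : nat) (k : nat -> nat) :
  (forall j, (j < m)%N -> (k j < k j.+1)%N) ->
  forall i i', (i <= i' <= m)%N -> (k i <= k i')%N.
Proof.
move=> kinc i i'; elim: i' => [|i' IH] H; first by have -> : i = 0%N by lia.
case: (leqP i i') => Hi.
  have := IH ltac:(lia); have := kinc i' ltac:(lia); lia.
by have -> : i = i'.+1 by lia.
Qed.

Lemma kstrict (m : nat) (k : nat -> nat) :
  (forall j, (j < m)%N -> (k j < k j.+1)%N) ->
  forall i i', (i < i' <= m)%N -> (k i < k i')%N.
Proof.
move=> kinc i i' H; have := kinc i ltac:(lia); have := kmono kinc (i := i.+1) (i' := i') ltac:(lia); lia.
Qed.

Lemma blk_range (m : nat) (k : nat -> nat) r j :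
  (forall j, (j < m)%N -> (k j < k j.+1)%N) ->
  (j < m)%N -> (k j <= r < k j.+1)%N -> blk m k r = j.
Proof.
move=> kinc Hj Hr; rewrite /blk.
have -> : iota 0 m = iota 0 j ++ iota j (m - j) by rewrite -iotaD; congr iota; lia.
rewrite find_cat.
have -> : has (fun j0 : nat => (r < k j0.+1)%N) (iota 0 j) = false.
  apply/negbTE/hasPn => i; rewrite mem_iota => Hi.
  have := kmono kinc (i := i.+1) (i' := j) ltac:(lia); lia.
rewrite size_iota.
have -> : (m - j = (m - j).-1.+1)%N by lia.
by rewrite /= ifT ?addn0 //; lia.
Qed.

Lemma blk_exists (m : nat) (k : nat -> nat) r :
  k 0%N = 0%N -> (forall j, (j < m)%N -> (k j < k j.+1)%N) ->
  (r < k m)%N -> exists j, (j < m)%N /\ (k j <= r < k j.+1)%N.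
Proof.
move=> k0 kinc.
suff: forall i, (i <= m)%N -> (r < k i)%N -> exists j, (j < i)%N /\ (k j <= r < k j.+1)%N.
  by move=> H Hr; have [j [Hj1 Hj2]] := H m (leqnn m) Hr; exists j.
elim => [|i IH] Hi Hr; first by rewrite k0 in Hr.
case: (ltnP r (k i)) => H.
  by have [j [Hj1 Hj2]] := IH ltac:(lia) H; exists j; split => //; lia.
by exists i; split => //; lia.
Qed.

Lemma blk_spec (m : nat) (k : nat -> nat) r :
  k 0%N = 0%N -> (forall j, (j < m)%N -> (k j < k j.+1)%N) ->
  (r < k m)%N -> (blk m k r < m)%N /\ (k (blk m k r) <= r < k (blk m k r).+1)%N.
Proof.
move=> k0 kinc Hr; have [j [Hj Hjr]] := blk_exists k0 kinc Hr.
by rewrite (blk_range kinc Hj Hjr).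
Qed.

Lemma block_sum (m : nat) (k : nat -> nat) (F : nat -> R) i :
  k 0%N = 0%N -> (forall j, (j < m)%N -> (k j < k j.+1)%N) -> (i <= m)%N ->
  \big[Rplus/0]_(0 <= r < k i) F r =
  \big[Rplus/0]_(0 <= j < i) \big[Rplus/0]_(k j <= r < k j.+1) F r.
Proof.
move=> k0 kinc; elim: i => [|i IH] Hi; first by rewrite k0 !big_geq.
rewrite big_nat_recr //= -IH; last lia.
rewrite -big_cat_nat //; have := kinc i ltac:(lia); lia.
Qed.

Lemma in_IP (m : nat) (k : nat -> nat) r :
  reflect (exists j, (1 <= j <= m)%N /\ k j = r.+1) (in_I m k r).
Proof.
apply: (iffP hasP) => [[j Hj /eqP Hk]|[j [Hj Hk]]].
  by exists j; split => //; move: Hj; rewrite mem_iota; lia.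
by exists j; [rewrite mem_iota; lia| apply/eqP].
Qed.

Lemma sum_const_nat (a b : nat) (c : R) :
  \big[Rplus/0]_(a <= i < b) c = INR (b - a) * c.
Proof.
rewrite big_const_nat; elim: (b - a)%N => [|d IH]; first by rewrite /=; ring.
rewrite iterS IH S_INR; ring.
Qed.

Lemma shift_sum (G : nat -> R) d L :
  (forall t, 0 <= G t) -> G 0%N = 0 ->
  \big[Rplus/0]_(0 <= t < L) G (t - d)%N <= \big[Rplus/0]_(0 <= t < L) G t.
Proof.
move=> G0 G00; elim: d L => [|d IH] L.
  by apply: sumR_le => t _; rewrite subn0; lra.
case: L => [|L]; first by rewrite !big_geq //; lra.
rewrite big_nat_recl // sub0n G00 Rplus_0_l.
under eq_bigr do rewrite subSS.
apply: Rle_trans; first exact: IH.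
rewrite [X in _ <= X]big_nat_recr //=; have := G0 L; lra.
Qed.


Lemma sumR_le_nat (a b : nat) (F G : nat -> R) :
  (forall i, (a <= i < b)%N -> F i <= G i) ->
  \big[Rplus/0]_(a <= i < b) F i <= \big[Rplus/0]_(a <= i < b) G i.
Proof.
move=> H; rewrite big_nat_cond [X in _ <= X]big_nat_cond.
by apply: sumR_le => i /andP [Hi _]; apply: H.
Qed.

Definition Sj (N m : nat) (w : 'I_N * 'I_m -> R) (j : nat) : R :=
  \big[Rplus/0]_(0 <= t < N.+1) zval w t j ^ 2.

Lemma Sj_ge0 (N m : nat) (w : 'I_N * 'I_m -> R) j : 0 <= Sj w j.
Proof. apply: sumR_ge0 => t _; nra. Qed.

Lemma Sj_ord (N m : nat) (w : 'I_N * 'I_m -> R) (b : 'I_m) :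
  Sj w b = \big[Rplus/0]_(a : 'I_N) w (a, b) ^ 2.
Proof.
rewrite /Sj big_nat_recl // zval_0 /= Rmult_0_l Rplus_0_l.
rewrite big_mkord; apply: eq_bigr => a _; by rewrite zval_ord.
Qed.

Lemma shift1_sum (N m : nat) (w : 'I_N * 'I_m -> R) (b : 'I_m) :
  \big[Rplus/0]_(0 <= t < N) zval w t.+1 b ^ 2 = Sj w b.
Proof. rewrite Sj_ord big_mkord; apply: eq_bigr => a _; by rewrite zval_ord. Qed.

Lemma wnorm (N m : nat) (w : 'I_N * 'I_m -> R) :
  vdot w w = \big[Rplus/0]_(0 <= j < m) Sj w j.
Proof.
rewrite big_mkord.
under [RHS]eq_bigr do rewrite Sj_ord.
rewrite exchange_big pair_bigA /vdot; apply: eq_bigr => -[a b] _ /=; ring.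
Qed.

Lemma wnorm_shift (N m : nat) (w : 'I_N * 'I_m -> R) :
  \big[Rplus/0]_(0 <= t < N) vdot (fun j : 'I_m => zval w t.+1 j) (fun j => zval w t.+1 j)
  = vdot w w.
Proof.
rewrite wnorm [X in _ = X]big_mkord.
under [RHS]eq_bigr do rewrite -shift1_sum.
rewrite exchange_big /vdot; apply: eq_bigr => t _; apply: eq_bigr => j _ /=; ring.
Qed.

Definition Hx (n m N : nat) (k : nat -> nat) (w : 'I_N * 'I_m -> R) (t r : nat) : R :=
  zval w (t + r.+1 - k (blk m k r).+1)%N (blk m k r) ^ 2.

Lemma xz_norm (n m N : nat) (k : nat -> nat) (w : 'I_N * 'I_m -> R) t :
  vnorm (@xz n m N k w t) ^ 2 = \big[Rplus/0]_(0 <= r < n) Hx n k w t r.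
Proof.
rewrite vnorm_sq big_mkord /vdot /xz /Hx; apply: eq_bigr => r _ /=; ring.
Qed.

Lemma S1 (n m N : nat) (k : nat -> nat) (w : 'I_N * 'I_m -> R) :
  k 0%N = 0%N -> (forall j, (j < m)%N -> (k j < k j.+1)%N) -> k m = n ->
  \big[Rplus/0]_(0 <= t < N.+1) vnorm (@xz n m N k w t) ^ 2
    <= INR (ctrl_index m k) * vdot w w.
Proof.
move=> k0 kinc km.
under eq_bigr do rewrite xz_norm.
rewrite exchange_big /=.
apply: (Rle_trans _ (\big[Rplus/0]_(0 <= r < n) Sj w (blk m k r))).
  apply: sumR_le_nat => r Hr.
  have [Hb Hkr] := blk_spec k0 kinc (r := r) ltac:(rewrite km; lia).
  rewrite /Sj /Hx.
  have E : forall t, (t + r.+1 - k (blk m k r).+1 = t - (k (blk m k r).+1 - r.+1))%N by move=> t; lia.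
  under eq_bigr do rewrite E.
  apply: (shift_sum (G := fun t => zval w t (blk m k r) ^ 2)).
    by move=> t; nra.
  by rewrite zval_0 /=; ring.
rewrite -km (block_sum _ k0 kinc (leqnn m)) wnorm big_distrr /=.
apply: sumR_le_nat => j Hj.
rewrite (eq_big_nat _ _ (F2 := fun _ => Sj w j)); last first.
  by move=> r Hr; rewrite (blk_range kinc (j := j)) //; lia.
rewrite sum_const_nat; apply: Rmult_le_compat_r; first exact: Sj_ge0.
apply: le_INR; apply/leP.
have := leq_bigmax (F := fun j : 'I_m => pidx k j.+1) (Ordinal (Hj : (j < m)%N)).
by rewrite /ctrl_index /pidx /=.
Qed.

Lemma S3 (n m N : nat) (k : nat -> nat) (w : 'I_N * 'I_m -> R) :
  k 0%N = 0%N -> (forall j, (j < m)%N -> (k j < k j.+1)%N) -> k m = n ->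
  vdot w w <= \big[Rplus/0]_(0 <= t < N.+1) vnorm (@xz n m N k w t) ^ 2.
Proof.
move=> k0 kinc km.
rewrite wnorm /Sj exchange_big.
apply: sumR_le_nat => t Ht.
rewrite xz_norm -km (block_sum _ k0 kinc (leqnn m)).
apply: sumR_le_nat => j Hj.
have Kpos : (k j < k j.+1)%N by apply: kinc; lia.
have -> : k j.+1 = (k j.+1).-1.+1 by lia.
rewrite big_nat_recr /=; last lia.
have -> : Hx (k m) k w t (k j.+1).-1 = zval w t j ^ 2.
  rewrite /Hx (blk_range kinc (j := j)); try lia.
  by have -> : (t + (k j.+1).-1.+1 - k j.+1 = t)%N by lia.
have : 0 <= \big[Rplus/0]_(k j <= i < (k j.+1).-1) Hx (k m) k w t i.
  by apply: sumR_ge0 => i _; rewrite /Hx; nra.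
lra.
Qed.


Definition ebas (I : finType) (c : I) : I -> R := fun c' => if c' == c then 1 else 0.

Definition linf (I : finType) (phi : (I -> R) -> R) : Prop :=
  forall z, phi z = \big[Rplus/0]_(c : I) (z c * phi (ebas c)).

Lemma linf_zval (N m : nat) tau j : linf (fun z : 'I_N * 'I_m -> R => zval z tau j).
Proof.
move=> z; rewrite /zval.
case: (insub (tau.-1) : option 'I_N) => [a|]; last by rewrite big1 // => c _; ring.
case: (insub j : option 'I_m) => [b|]; last by rewrite big1 // => c _; ring.
case: (0 < tau)%N; last by rewrite big1 // => c _; ring.
rewrite -[LHS](sumR_pred1 z (a, b)); apply: eq_bigr => c _; by rewrite /ebas eq_sym.
Qed.

Lemma linf_comb (I J : finType) (phi0 : (I -> R) -> R) (psi : J -> (I -> R) -> R) (a : J -> R) :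
  linf phi0 -> (forall r, linf (psi r)) ->
  linf (fun z => phi0 z - \big[Rplus/0]_(r : J) (a r * psi r z)).
Proof.
move=> H0 H z; rewrite /=.
under [RHS]eq_bigr do rewrite Rmult_minus_distr_l.
rewrite sumR_sub -H0; congr (_ - _).
under [RHS]eq_bigr do rewrite big_distrr.
rewrite exchange_big /=; apply: eq_bigr => r _.
rewrite (H r z) big_distrr /=; apply: eq_bigr => c _; ring.
Qed.

Lemma linf_mv (I J : finType) (L : (I -> R) -> (J -> R)) :
  (forall j, linf (fun z => L z j)) -> forall z, L z = mv (fun j c => L (ebas c) j) z.
Proof.
move=> H z; apply: functional_extensionality => j; rewrite (H j z) /mv.
by apply: eq_bigr => c _; ring.
Qed.

Lemma linf_xz (n m N : nat) (k : nat -> nat) t r :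
  linf (fun z : 'I_N * 'I_m -> R => @xz n m N k z t r).
Proof. exact: linf_zval. Qed.

Lemma linf_uz (n m N : nat) (k : nat -> nat) A t j :
  linf (fun z : 'I_N * 'I_m -> R => @uz n m N k A z t j).
Proof.
apply: (linf_comb (psi := fun r z => @xz n m N k z t r)); [exact: linf_zval|].
move=> r; exact: linf_xz.
Qed.

Lemma vnorm_scale (I : finType) a (x : I -> R) : vnorm (vscale a x) = Rabs a * vnorm x.
Proof.
rewrite /vnorm -sqrt_Rsqr_abs -sqrt_mult; [|exact: Rle_0_sqr|exact: vdot_ge0].
congr sqrt; rewrite /vdot big_distrr; apply: eq_bigr => i _ /=; rewrite /vscale /Rsqr; ring.
Qed.

Lemma vdot_coord (I : finType) (v : I -> R) i : v i * v i <= vdot v v.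
Proof.
rewrite /vdot (bigD1 i) //=.
have : 0 <= \big[Rplus/0]_(j | j != i) (v j * v j) by apply: sumR_ge0 => j _; nra.
lra.
Qed.

Lemma opnorm_bound (I J : finType) (M : I -> J -> R) c :
  is_opnorm M c -> forall v, vnorm (mv M v) <= c * vnorm v.
Proof.
move=> [Hub _] v.
case: (Rle_lt_or_eq_dec 0 (vnorm v) (vnorm_ge0 v)) => Hv.
  have H1 : vnorm (vscale (/ vnorm v) v) <= 1.
    rewrite vnorm_scale Rabs_right; last by apply: Rle_ge; apply: Rlt_le; apply: Rinv_0_lt_compat.
    rewrite Rinv_l; lra.
  have H2 := Hub _ (ex_intro _ _ (conj H1 erefl)).
  have E : mv M (vscale (/ vnorm v) v) = vscale (/ vnorm v) (mv M v).
    have := mv_lin M (/ vnorm v) 0 v v.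
    have -> : vadd (vscale (/ vnorm v) v) (vscale 0 v) = vscale (/ vnorm v) v.
      by apply: functional_extensionality => i; rewrite /vadd /vscale; ring.
    move=> ->; apply: functional_extensionality => i; rewrite /vadd /vscale; ring.
  rewrite E vnorm_scale Rabs_right in H2; last by apply: Rle_ge; apply: Rlt_le; apply: Rinv_0_lt_compat.
  have := Rmult_le_compat_l (vnorm v) _ _ (vnorm_ge0 v) H2.
  rewrite -Rmult_assoc Rinv_r; lra.
have v0 : forall i, v i = 0.
  move=> i; have := vdot_coord v i; rewrite -vnorm_sq -Hv /=; nra.
have -> : mv M v = fun _ => 0.
  apply: functional_extensionality => j; rewrite /mv big1 // => i _; rewrite v0; ring.
rewrite -Hv Rmult_0_r; apply: Req_le.
rewrite /vnorm /vdot big1 ?sqrt_0 // => i _; ring.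
Qed.

Definition stk (n m N : nat) (k : nat -> nat) (w : 'I_N * 'I_m -> R) t :
  ('I_m + 'I_n)%type -> R :=
  fun c => match c with inl j => zval w t.+1 j | inr r => @xz n m N k w t r end.

Lemma uz_MIA (n m N : nat) (k : nat -> nat) A (w : 'I_N * 'I_m -> R) t :
  @uz n m N k A w t = mv (@MIA n m k A) (@stk n m N k w t).
Proof.
apply: functional_extensionality => j.
rewrite /uz /mv big_sumType /MIA /stk /= sumR_pred1'.
rewrite /Rminus -sumR_opp; congr (_ + _); apply: eq_bigr => r _ /=; ring.
Qed.

Lemma stk_norm (n m N : nat) (k : nat -> nat) (w : 'I_N * 'I_m -> R) t :
  vnorm (@stk n m N k w t) ^ 2 =
  vdot (fun j : 'I_m => zval w t.+1 j) (fun j => zval w t.+1 j) + vnorm (@xz n m N k w t) ^ 2.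
Proof. by rewrite !vnorm_sq /vdot big_sumType. Qed.

Lemma S2 (n m N : nat) (k : nat -> nat) A (w : 'I_N * 'I_m -> R) nM :
  k 0%N = 0%N -> (forall j, (j < m)%N -> (k j < k j.+1)%N) -> k m = n ->
  is_opnorm (@MIA n m k A) nM ->
  \big[Rplus/0]_(0 <= t < N) vnorm (@uz n m N k A w t) ^ 2
    <= (INR (ctrl_index m k) + 1) * nM ^ 2 * vdot w w.
Proof.
move=> k0 kinc km Hop.
apply: (Rle_trans _ (\big[Rplus/0]_(0 <= t < N) (nM ^ 2 *
   (vdot (fun j : 'I_m => zval w t.+1 j) (fun j => zval w t.+1 j) + vnorm (@xz n m N k w t) ^ 2)))).
  apply: sumR_le => t _.
  rewrite uz_MIA -stk_norm.
  have := opnorm_bound Hop (@stk n m N k w t).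
  have := vnorm_ge0 (mv (MIA k A) (@stk n m N k w t)).
  move=> *; simpl; nra.
rewrite -big_distrr big_split wnorm_shift.
have H1 := S1 w k0 kinc km.
have H2 : \big[Rplus/0]_(0 <= t < N) vnorm (@xz n m N k w t) ^ 2 <=
          \big[Rplus/0]_(0 <= t < N.+1) vnorm (@xz n m N k w t) ^ 2.
  rewrite [X in _ <= X]big_nat_recr //=.
  have := pow2_ge_0 (vnorm (@xz n m N k w N)); lra.
have HX : \big[Rplus/0]_(0 <= t < N) vnorm (@xz n m N k w t) ^ 2 <=
   INR (ctrl_index m k) * vdot w w by lra.
have h := pow2_ge_0 nM.
apply: Rle_trans; first exact: (Rmult_le_compat_l _ _ _ h (Rplus_le_compat_l (vdot w w) _ _ HX)).
right; ring.
Qed.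


Definition Mx (n m N : nat) (k : nat -> nat) t : 'I_n -> ('I_N * 'I_m) -> R :=
  fun r c => @xz n m N k (ebas c) t r.
Definition Mu (n m N : nat) (k : nat -> nat) A t : 'I_m -> ('I_N * 'I_m) -> R :=
  fun j c => @uz n m N k A (ebas c) t j.

Lemma xz_eq (n m N : nat) (k : nat -> nat) z t : @xz n m N k z t = mv (@Mx n m N k t) z.
Proof. apply: (linf_mv (L := fun z => @xz n m N k z t)) => j; exact: linf_xz. Qed.

Lemma uz_eq (n m N : nat) (k : nat -> nat) A z t : @uz n m N k A z t = mv (@Mu n m N k A t) z.
Proof. apply: (linf_mv (L := fun z => @uz n m N k A z t)) => j; exact: linf_uz. Qed.

Lemma CSnat (L : nat) (a b : nat -> R) K u v :
  0 <= K -> 0 <= u -> 0 <= v ->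
  \big[Rplus/0]_(0 <= t < L) a t ^ 2 <= K * u ^ 2 ->
  \big[Rplus/0]_(0 <= t < L) b t ^ 2 <= K * v ^ 2 ->
  \big[Rplus/0]_(0 <= t < L) (a t * b t) <= K * u * v.
Proof.
move=> K0 u0 v0 Ha Hb.
have := CS' (fun i : 'I_L => a i) (fun i : 'I_L => b i).
have E : forall c : nat -> R, vdot (fun i : 'I_L => c i) (fun i : 'I_L => c i) =
    \big[Rplus/0]_(0 <= t < L) c t ^ 2.
  by move=> c; rewrite big_mkord /vdot; apply: eq_bigr => i _ /=; ring.
have -> : vdot (fun i : 'I_L => a i) (fun i : 'I_L => b i) = \big[Rplus/0]_(0 <= t < L) (a t * b t).
  by rewrite big_mkord.
rewrite /vnorm !E => H.
have Sa : sqrt (\big[Rplus/0]_(0 <= t < L) a t ^ 2) <= sqrt K * u.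
  rewrite -(sqrt_pow2 u) // -sqrt_mult //; last exact: pow2_ge_0.
  by apply: sqrt_le_1_alt.
have Sb : sqrt (\big[Rplus/0]_(0 <= t < L) b t ^ 2) <= sqrt K * v.
  rewrite -(sqrt_pow2 v) // -sqrt_mult //; last exact: pow2_ge_0.
  by apply: sqrt_le_1_alt.
have := sqrt_pos (\big[Rplus/0]_(0 <= t < L) a t ^ 2).
have := sqrt_pos (\big[Rplus/0]_(0 <= t < L) b t ^ 2).
have := sqrt_pos K.
have KK : sqrt K * sqrt K = K by apply: sqrt_sqrt.
move=> *.
apply: Rle_trans; first exact: H.
apply: Rle_trans; first by apply: Rmult_le_compat; [apply: sqrt_pos|apply: sqrt_pos|exact: Sa|exact: Sb].
have -> : sqrt K * u * (sqrt K * v) = (sqrt K * sqrt K) * u * v by ring.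
rewrite KK; lra.
Qed.

Lemma vdot_sumv (I : finType) (L : nat) (F : nat -> I -> R) (D : I -> R) :
  vdot (fun c => \big[Rplus/0]_(0 <= t < L) F t c) D =
  \big[Rplus/0]_(0 <= t < L) vdot (F t) D.
Proof.
rewrite /vdot; under eq_bigr do rewrite big_distrl.
by rewrite exchange_big.
Qed.

Lemma reorg (a b c d : R) : (a + b) - (c + d) = (a - c) + (b - d).
Proof. ring. Qed.

Lemma grad_choice (I : finType) (P : nat -> bool) (l : R) (F : nat -> (I -> R) -> R) :
  (forall t, P t -> smooth l (F t)) ->
  exists G : nat -> (I -> R) -> (I -> R), forall t, P t ->
    (forall x, has_gradient (F t) x (G t x)) /\
    (forall x y, vnorm (vsub (G t x) (G t y)) <= l * vnorm (vsub x y)).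
Proof.
move=> H.
have H' : forall t, exists gr : (I -> R) -> (I -> R), P t ->
    (forall x, has_gradient (F t) x (gr x)) /\
    (forall x y, vnorm (vsub (gr x) (gr y)) <= l * vnorm (vsub x y)).
  move=> t; case Pt: (P t).
    by have [gr Hgr] := H t Pt; exists gr.
  by exists (fun _ _ => 0).
exists (fun t => proj1_sig (constructive_indefinite_description _ (H' t))).
move=> t Pt; exact: (proj2_sig (constructive_indefinite_description _ (H' t)) Pt).
Qed.

Lemma term_bound (I J : finType) (M : I -> J -> R) (G : (I -> R) -> (I -> R)) l z z' D :
  (forall x y, vnorm (vsub (G x) (G y)) <= l * vnorm (vsub x y)) ->
  vdot (vsub (G (mv M z)) (G (mv M z'))) (mv M D) <=
  l * (vnorm (mv M (vsub z z')) * vnorm (mv M D)).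
Proof.
move=> HL; apply: Rle_trans; first exact: CS'.
rewrite mv_sub -Rmult_assoc; apply: Rmult_le_compat_r; first exact: vnorm_ge0.
exact: HL.
Qed.

Lemma C_smooth (n m N : nat) (k : nat -> nat) A f g lf lg nM :
  k 0%N = 0%N -> (forall j, (j < m)%N -> (k j < k j.+1)%N) -> k m = n ->
  0 < lf -> 0 < lg -> is_opnorm (@MIA n m k A) nM ->
  (forall t, (t <= N)%N -> smooth lf (f t)) ->
  (forall t, (t < N)%N -> smooth lg (g t)) ->
  smooth (INR (ctrl_index m k) * lf + (INR (ctrl_index m k) + 1) * lg * nM ^ 2)
         (@Ccost n m N k A f g).
Proof.
move=> k0 kinc km lf0 lg0 Hop Hf Hg.
have [gf Hgf] := grad_choice (P := fun t => (t <= N)%N) Hf.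
have [gg Hgg] := grad_choice (P := fun t => (t < N)%N) Hg.
set GC := fun z => vadd
  (fun c => \big[Rplus/0]_(0 <= t < N.+1) mvT (@Mx n m N k t) (gf t (mv (@Mx n m N k t) z)) c)
  (fun c => \big[Rplus/0]_(0 <= t < N) mvT (@Mu n m N k A t) (gg t (mv (@Mu n m N k A t) z)) c).
exists GC; split.
  move=> z.
  apply: (hg_ext (f1 := fun y => \big[Rplus/0]_(0 <= t < N.+1) f t (mv (@Mx n m N k t) y) +
                                 \big[Rplus/0]_(0 <= t < N) g t (mv (@Mu n m N k A t) y))) => [y|i|].
  - rewrite /Ccost; congr (_ + _); apply: eq_bigr => t _; by rewrite ?xz_eq ?uz_eq.
  - by [].
  apply: hg_add; apply: hg_sum => t Ht; apply: hg_comp.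
    by apply: (proj1 (Hgf t _)).
  by apply: (proj1 (Hgg t _)).
move=> z z'.
set w := vsub z z'.
set D := vsub (GC z) (GC z').
set p := ctrl_index m k.
have ED : vdot D D =
  \big[Rplus/0]_(0 <= t < N.+1) vdot (vsub (gf t (mv (@Mx n m N k t) z)) (gf t (mv (@Mx n m N k t) z')))
                                    (mv (@Mx n m N k t) D) +
  \big[Rplus/0]_(0 <= t < N) vdot (vsub (gg t (mv (@Mu n m N k A t) z)) (gg t (mv (@Mu n m N k A t) z')))
                                    (mv (@Mu n m N k A t) D).
  have -> : D = vadd
    (fun c => \big[Rplus/0]_(0 <= t < N.+1) mvT (@Mx n m N k t)
        (vsub (gf t (mv (@Mx n m N k t) z)) (gf t (mv (@Mx n m N k t) z'))) c)
    (fun c => \big[Rplus/0]_(0 <= t < N) mvT (@Mu n m N k A t)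
        (vsub (gg t (mv (@Mu n m N k A t) z)) (gg t (mv (@Mu n m N k A t) z'))) c).
    apply: functional_extensionality => c.
    rewrite /D /GC /vsub /vadd reorg -!sumR_sub.
    by congr (_ + _); apply: eq_bigr => t _; rewrite /mvT -sumR_sub; apply: eq_bigr => i _ /=; ring.
  rewrite {1}vdot_addl !vdot_sumv.
  by congr (_ + _); apply: eq_bigr => t _; rewrite vdot_mv.
have B1 : vdot D D <=
   lf * \big[Rplus/0]_(0 <= t < N.+1) (vnorm (mv (@Mx n m N k t) w) * vnorm (mv (@Mx n m N k t) D)) +
   lg * \big[Rplus/0]_(0 <= t < N) (vnorm (mv (@Mu n m N k A t) w) * vnorm (mv (@Mu n m N k A t) D)).
  rewrite ED !big_distrr; apply: Rplus_le_compat; apply: sumR_le_nat => t Ht; apply: term_bound.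
    by apply: (proj2 (Hgf t _)); lia.
  by apply: (proj2 (Hgg t _)); lia.
have nw := vnorm_ge0 w.
have nD := vnorm_ge0 D.
have p0 := pos_INR p.
have C1 : \big[Rplus/0]_(0 <= t < N.+1) (vnorm (mv (@Mx n m N k t) w) * vnorm (mv (@Mx n m N k t) D))
   <= INR p * vnorm w * vnorm D.
  apply: CSnat => //.
    under eq_bigr do rewrite -xz_eq.
    by rewrite vnorm_sq; apply: S1.
  under eq_bigr do rewrite -xz_eq.
  by rewrite vnorm_sq; apply: S1.
have K0 : 0 <= (INR p + 1) * nM ^ 2 by apply: Rmult_le_pos; [lra|apply: pow2_ge_0].
have C2 : \big[Rplus/0]_(0 <= t < N) (vnorm (mv (@Mu n m N k A t) w) * vnorm (mv (@Mu n m N k A t) D))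
   <= (INR p + 1) * nM ^ 2 * vnorm w * vnorm D.
  apply: CSnat => //.
    under eq_bigr do rewrite -uz_eq.
    by rewrite vnorm_sq; apply: S2.
  under eq_bigr do rewrite -uz_eq.
  by rewrite vnorm_sq; apply: S2.
rewrite -vnorm_sq' in B1.
set c := INR p * lf + (INR p + 1) * lg * nM ^ 2.
have c0 : 0 <= c by rewrite /c; nra.
have H : vnorm D * vnorm D <= c * vnorm w * vnorm D.
  apply: Rle_trans; first exact: B1.
  have := Rmult_le_compat_l lf _ _ (Rlt_le _ _ lf0) C1.
  have := Rmult_le_compat_l lg _ _ (Rlt_le _ _ lg0) C2.
  rewrite /c; move=> *; nra.
have := Rmult_le_pos _ _ c0 nw.
move=> *; nra.
Qed.


Lemma sum_lin3 (L : nat) (F G H : nat -> R) a b c :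
  \big[Rplus/0]_(0 <= t < L) (a * F t + b * G t - c * H t) =
  a * \big[Rplus/0]_(0 <= t < L) F t + b * \big[Rplus/0]_(0 <= t < L) G t
  - c * \big[Rplus/0]_(0 <= t < L) H t.
Proof. by rewrite sumR_sub big_split /= !big_distrr. Qed.

Lemma C_sconvex (n m N : nat) (k : nat -> nat) A f g mu :
  k 0%N = 0%N -> (forall j, (j < m)%N -> (k j < k j.+1)%N) -> k m = n ->
  0 < mu ->
  (forall t, (t <= N)%N -> strongly_convex mu (f t)) ->
  (forall t, (t < N)%N -> convex (g t)) ->
  strongly_convex mu (@Ccost n m N k A f g).
Proof.
move=> k0 kinc km mu0 Hf Hg x y a Ha.
set w := vsub x y.
have Ex : forall t, @xz n m N k (vadd (vscale a x) (vscale (1 - a) y)) t =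
    vadd (vscale a (@xz n m N k x t)) (vscale (1 - a) (@xz n m N k y t)).
  by move=> t; rewrite !xz_eq mv_lin.
have Eu : forall t, @uz n m N k A (vadd (vscale a x) (vscale (1 - a) y)) t =
    vadd (vscale a (@uz n m N k A x t)) (vscale (1 - a) (@uz n m N k A y t)).
  by move=> t; rewrite !uz_eq mv_lin.
have Ew : forall t, vsub (@xz n m N k x t) (@xz n m N k y t) = @xz n m N k w t.
  by move=> t; rewrite !xz_eq mv_sub.
have B1 : \big[Rplus/0]_(0 <= t < N.+1) f t (@xz n m N k (vadd (vscale a x) (vscale (1 - a) y)) t)
   <= \big[Rplus/0]_(0 <= t < N.+1) (a * f t (@xz n m N k x t) + (1 - a) * f t (@xz n m N k y t)
          - (mu / 2 * a * (1 - a)) * vnorm (@xz n m N k w t) ^ 2).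
  apply: sumR_le_nat => t Ht; rewrite Ex -Ew; apply: Hf => //; lia.
have B2 : \big[Rplus/0]_(0 <= t < N) g t (@uz n m N k A (vadd (vscale a x) (vscale (1 - a) y)) t)
   <= \big[Rplus/0]_(0 <= t < N) (a * g t (@uz n m N k A x t) + (1 - a) * g t (@uz n m N k A y t)
          - 0 * vnorm (vsub (@uz n m N k A x t) (@uz n m N k A y t)) ^ 2).
  apply: sumR_le_nat => t Ht; rewrite Eu.
  have := Hg t ltac:(lia) (@uz n m N k A x t) (@uz n m N k A y t) a Ha.
  have -> : 0 / 2 * a * (1 - a) = 0 by field.
  by [].
rewrite sum_lin3 in B1; rewrite sum_lin3 in B2.
have S := S3 w k0 kinc km.
rewrite -vnorm_sq in S.
have c0 : 0 <= mu / 2 * a * (1 - a).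
  apply: Rmult_le_pos; [apply: Rmult_le_pos|]; lra.
have := Rmult_le_compat_l _ _ _ c0 S.
rewrite /Ccost; move: B1 B2.
set s1 := \big[Rplus/0]_(0 <= t < N.+1) _.
set s2 := \big[Rplus/0]_(0 <= t < N.+1) _.
set s3 := \big[Rplus/0]_(0 <= t < N.+1) _.
set s4 := \big[Rplus/0]_(0 <= t < N.+1) _.
set s5 := \big[Rplus/0]_(0 <= t < N) _.
set s6 := \big[Rplus/0]_(0 <= t < N) _.
set s7 := \big[Rplus/0]_(0 <= t < N) _.
set s8 := \big[Rplus/0]_(0 <= t < N) _.
move=> *; nra.
Qed.


Lemma pidx_le (m : nat) (k : nat -> nat) j :
  (j < m)%N -> (k j.+1 - k j <= ctrl_index m k)%N.
Proof.
move=> Hj.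
have := leq_bigmax (F := fun j : 'I_m => pidx k j.+1) (Ordinal (Hj : (j < m)%N)).
by rewrite /ctrl_index /pidx /=.
Qed.

Lemma vat_lt (n : nat) (v : 'I_n -> R) i (H : (i < n)%N) : vat v i = v (Ordinal H).
Proof. have E := valK (Ordinal H); rewrite /= in E; by rewrite /vat E. Qed.

Lemma kinj (m : nat) (k : nat -> nat) (j j' : 'I_m) :
  (forall j, (j < m)%N -> (k j < k j.+1)%N) ->
  (k (nat_of_ord j).+1 == k (nat_of_ord j').+1)%N = (j == j').
Proof.
move=> kinc; case: (eqVneq j j') => [->|Hne]; first by rewrite eqxx.
apply/negbTE; move: Hne; rewrite -val_eqE /= => Hne.
case: (ltngtP j j') => H; last by rewrite H eqxx in Hne.
- have := kstrict kinc (i := j.+1) (i' := j'.+1) ltac:(have := ltn_ord j'; lia); lia.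
- have := kstrict kinc (i := j'.+1) (i' := j.+1) ltac:(have := ltn_ord j; lia); lia.
Qed.

Lemma mvB_in (n m : nat) (k : nat -> nat) (B : 'I_n -> 'I_m -> R) (u : 'I_m -> R) (j : 'I_m) (r : 'I_n) :
  (forall j, (j < m)%N -> (k j < k j.+1)%N) ->
  (forall (r : 'I_n) (j : 'I_m),
          B r j = if ((nat_of_ord r).+1 == k (nat_of_ord j).+1)%N then 1 else 0) ->
  (nat_of_ord r).+1 = k (nat_of_ord j).+1 -> mv B u r = u j.
Proof.
move=> kinc hB Hr; rewrite /mv -(sumR_pred1' u j); apply: eq_bigr => j' _.
by rewrite hB Hr kinj.
Qed.

Lemma mvB_out (n m : nat) (k : nat -> nat) (B : 'I_n -> 'I_m -> R) (u : 'I_m -> R) (r : 'I_n) :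
  (forall (r : 'I_n) (j : 'I_m),
          B r j = if ((nat_of_ord r).+1 == k (nat_of_ord j).+1)%N then 1 else 0) ->
  ~~ in_I m k r -> mv B u r = 0.
Proof.
move=> hB Hr; rewrite /mv big1 // => j _; rewrite hB.
case: eqP => [E|_]; last ring.
case/negP: Hr; apply/in_IP; exists (nat_of_ord j).+1; split => //.
by have := ltn_ord j; lia.
Qed.

Lemma mvA_out (n m : nat) (k : nat -> nat) (A : 'I_n -> 'I_n -> R) (x : 'I_n -> R) (r : 'I_n)
    (H : ((nat_of_ord r).+1 < n)%N) :
  (forall r c : 'I_n, ~~ in_I m k r ->
          A r c = if (nat_of_ord c == (nat_of_ord r).+1)%N then 1 else 0) ->
  ~~ in_I m k r -> mv A x r = x (Ordinal H).
Proof.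
move=> hA Hr; rewrite /mv -(sumR_pred1' x (Ordinal H)); apply: eq_bigr => c _.
have -> : (Ordinal H == c) = (nat_of_ord c == (nat_of_ord r).+1)%N by rewrite -val_eqE /= eq_sym.
by rewrite hA.
Qed.

Lemma AI_eq (n m : nat) (k : nat -> nat) (A : 'I_n -> 'I_n -> R) (x : 'I_n -> R) (j : 'I_m) (r : 'I_n) :
  nat_of_ord r = (k (nat_of_ord j).+1).-1 -> mv (AI k A) x j = mv A x r.
Proof.
move=> Hr; rewrite /mv /AI; apply: eq_bigr => c _.
by rewrite -Hr (vat_lt _ (ltn_ord r)); congr (A _ c * _); apply: val_inj.
Qed.

Lemma notin_I (m : nat) (k : nat -> nat) r j :
  (forall j, (j < m)%N -> (k j < k j.+1)%N) ->
  (j < m)%N -> (k j < r.+1 < k j.+1)%N -> ~~ in_I m k r.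
Proof.
move=> kinc Hj Hr; apply/in_IP => -[j' [Hj' E]].
case: (ltngtP j' j.+1) => H.
- have := kmono kinc (i := j') (i' := j) ltac:(lia); lia.
- have := kmono kinc (i := j.+1) (i' := j') ltac:(lia); lia.
- subst j'; lia.
Qed.

Lemma part3 (n m N : nat) (k : nat -> nat) A (f : nat -> ('I_n -> R) -> R) (g : nat -> ('I_m -> R) -> R) :
  k 0%N = 0%N -> (forall j, (j < m)%N -> (k j < k j.+1)%N) -> k m = n ->
  forall t, (t < N)%N -> forall z z' : 'I_N * 'I_m -> R,
      (forall tau j, (t.+1 <= tau + ctrl_index m k)%N -> (tau <= t.+1)%N ->
          zval z tau j = zval z' tau j) ->
      f t (@xz n m N k z t) + g t (@uz n m N k A z t) = f t (@xz n m N k z' t) + g t (@uz n m N k A z' t).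
Proof.
move=> k0 kinc km t Ht z z' H.
have Ex : @xz n m N k z t = @xz n m N k z' t.
  apply: functional_extensionality => r; rewrite /xz.
  have [Hb Hkr] := blk_spec k0 kinc (r := r) ltac:(rewrite km; exact: ltn_ord).
  have Hp := @pidx_le m k _ Hb.
  case E: (t + (nat_of_ord r).+1 - k (blk m k r).+1)%N => [|tau].
    by rewrite !zval_0.
  rewrite -E; apply: H; lia.
have Eu : @uz n m N k A z t = @uz n m N k A z' t.
  apply: functional_extensionality => j; rewrite /uz Ex H //; lia.
by rewrite Ex Eu.
Qed.

Lemma J_C (n m N : nat) (f : nat -> ('I_n -> R) -> R) (g : nat -> ('I_m -> R) -> R) x u :
  @Jcost n m N f g x u =
  \big[Rplus/0]_(0 <= t < N.+1) f t (x t) + \big[Rplus/0]_(0 <= t < N) g t (u t).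
Proof. rewrite /Jcost big_split big_nat_recr //=; ring. Qed.

Lemma part2c (n m N : nat) (k : nat -> nat) A B (f : nat -> ('I_n -> R) -> R) (g : nat -> ('I_m -> R) -> R) :
  @canonical_form n m k A B ->
  forall z : 'I_N * 'I_m -> R,
      (forall r, @xz n m N k z 0%N r = 0) /\
      (forall t, (t < N)%N -> forall r,
          @xz n m N k z t.+1 r = mv A (@xz n m N k z t) r + mv B (@uz n m N k A z t) r) /\
      @Jcost n m N f g (@xz n m N k z) (@uz n m N k A z) = @Ccost n m N k A f g z.
Proof.
case=> k0 kinc km hA hB z; split; [|split].
- move=> r; rewrite /xz.
  have [Hb Hkr] := blk_spec k0 kinc (r := r) ltac:(rewrite km; exact: ltn_ord).
  have -> : (0 + (nat_of_ord r).+1 - k (blk m k r).+1 = 0)%N by lia.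
  exact: zval_0.
- move=> t Ht r.
  have [Hb Hkr] := blk_spec k0 kinc (r := r) ltac:(rewrite km; exact: ltn_ord).
  case HI: (in_I m k r).
    have [j0 [Hj0 Ej0]] := in_IP _ _ _ HI.
    have Hj : (j0.-1 < m)%N by lia.
    set jo := Ordinal Hj.
    have Ejo : (nat_of_ord r).+1 = k (nat_of_ord jo).+1 by rewrite /= prednK; lia.
    rewrite (@mvB_in n m k B _ jo r kinc hB Ejo).
    have Eb : blk m k r = jo.
      apply: blk_range => //; have := kinc jo Hj; rewrite /= in Ejo *; lia.
    rewrite /uz (@AI_eq n m k A _ jo r); last by rewrite /= -Ejo.
    rewrite /xz Eb -Ejo.
    have -> : (t.+1 + (nat_of_ord r).+1 - (nat_of_ord r).+1 = t.+1)%N by lia.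
    ring.
  have Hne : ((nat_of_ord r).+1 != k (blk m k r).+1)%N.
    apply/eqP => E; move/negP: HI; apply; apply/in_IP; exists (blk m k r).+1; split => //; lia.
  have Hr1 : ((nat_of_ord r).+1 < n)%N.
    have := kmono kinc (i := (blk m k r).+1) (i' := m) ltac:(lia); lia.
  rewrite (mvB_out _ hB) ?HI // Rplus_0_r (mvA_out _ Hr1 hA) ?HI //.
  rewrite /xz /=.
  have -> : blk m k (nat_of_ord r).+1 = blk m k r.
    apply: blk_range => //; lia.
  by have -> : (t + (nat_of_ord r).+2 = t.+1 + (nat_of_ord r).+1)%N by lia.
- by rewrite J_C.
Qed.

Lemma rj_lt (n m : nat) (k : nat -> nat) j :
  k 0%N = 0%N -> (forall j, (j < m)%N -> (k j < k j.+1)%N) -> k m = n ->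
  (j < m)%N -> ((k j.+1).-1 < n)%N.
Proof.
move=> k0 kinc km Hj.
have := kmono kinc (i := j.+1) (i' := m) ltac:(lia); have := kinc j Hj; lia.
Qed.

Lemma fwd_shift (n m N : nat) (k : nat -> nat) A B (x : nat -> 'I_n -> R) (u : nat -> 'I_m -> R) :
  @canonical_form n m k A B ->
  (forall r, x 0%N r = 0) ->
  (forall t, (t < N)%N -> forall r, x t.+1 r = mv A (x t) r + mv B (u t) r) ->
  forall d t (r : 'I_n) j (rj : 'I_n), (j < m)%N -> (t <= N)%N ->
    (k j <= r)%N -> ((nat_of_ord r).+1 <= k j.+1)%N -> (k j.+1 - (nat_of_ord r).+1)%N = d ->
    nat_of_ord rj = (k j.+1).-1 ->
    x t r = if (t <= d)%N then 0 else x (t - d)%N rj.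
Proof.
case=> k0 kinc km hA hB Hx0 Hdyn.
elim => [|d IH] t r j rj Hj Ht Hr1 Hr2 Hd Hrj.
  have -> : r = rj by apply: val_inj; rewrite /= Hrj; lia.
  by case: t Ht => [|t] Ht //=; rewrite subn0.
case: t Ht => [|t] Ht; first by rewrite Hx0.
have Hr1' : ((nat_of_ord r).+1 < n)%N.
  have := kmono kinc (i := j.+1) (i' := m) ltac:(lia); lia.
have HI : ~~ in_I m k r by apply: (notin_I kinc Hj); lia.
rewrite Hdyn; last lia.
rewrite (mvB_out _ hB HI) Rplus_0_r (mvA_out _ Hr1' hA HI).
rewrite (IH t (Ordinal Hr1') j rj Hj) //=; try lia.
Qed.

Lemma fwd_x (n m N : nat) (k : nat -> nat) A B (x : nat -> 'I_n -> R) (u : nat -> 'I_m -> R) :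
  @canonical_form n m k A B ->
  (forall r, x 0%N r = 0) ->
  (forall t, (t < N)%N -> forall r, x t.+1 r = mv A (x t) r + mv B (u t) r) ->
  forall t, (t <= N)%N -> forall r, @xz n m N k (@zI n m N k x) t r = x t r.
Proof.
move=> CF Hx0 Hdyn t Ht r.
have CF' := CF; case: CF' => k0 kinc km hA hB.
have [Hb Hkr] := blk_spec k0 kinc (r := r) ltac:(rewrite km; exact: ltn_ord).
set j := blk m k r in Hb Hkr *.
have Hrj := rj_lt k0 kinc km Hb.
rewrite (fwd_shift CF Hx0 Hdyn (d := (k j.+1 - (nat_of_ord r).+1)%N) (rj := Ordinal Hrj) Hb Ht) //; try lia.
rewrite /xz -/j.
case: leqP => Htd.
  have -> : (t + (nat_of_ord r).+1 - k j.+1 = 0)%N by lia.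
  exact: zval_0.
have Ha : ((t - (k j.+1 - (nat_of_ord r).+1)).-1 < N)%N by lia.
have E1 : (t + (nat_of_ord r).+1 - k j.+1)%N = (nat_of_ord (Ordinal Ha)).+1 by rewrite /=; lia.
have Ez := zval_ord (@zI n m N k x) (Ordinal Ha) (Ordinal Hb).
rewrite E1 Ez /zI /restrI /= (vat_lt _ Hrj).
by rewrite prednK //; lia.
Qed.

Lemma part2f (n m N : nat) (k : nat -> nat) A B (f : nat -> ('I_n -> R) -> R) (g : nat -> ('I_m -> R) -> R) :
  @canonical_form n m k A B ->
  (forall (x : nat -> 'I_n -> R) (u : nat -> 'I_m -> R),
      (forall r, x 0%N r = 0) ->
      (forall t, (t < N)%N -> forall r, x t.+1 r = mv A (x t) r + mv B (u t) r) ->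
      let z := @zI n m N k x in
      (forall t, (t <= N)%N -> forall r, @xz n m N k z t r = x t r) /\
      (forall t, (t < N)%N -> forall j, @uz n m N k A z t j = u t j) /\
      @Ccost n m N k A f g z = @Jcost n m N f g x u).
Proof.
move=> CF x u Hx0 Hdyn z.
have CF' := CF; case: CF' => k0 kinc km hA hB.
have HX := fwd_x CF Hx0 Hdyn.
have HXf : forall t, (t <= N)%N -> @xz n m N k z t = x t.
  by move=> t Ht; apply: functional_extensionality => r; apply: HX.
have HU : forall t, (t < N)%N -> forall j, @uz n m N k A z t j = u t j.
  move=> t Ht j.
  have Hrj := rj_lt k0 kinc km (ltn_ord j).
  rewrite /uz HXf; last lia.
  rewrite (zval_ord z (Ordinal Ht) j) /z /zI /restrI /= (vat_lt _ Hrj).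
  rewrite (@AI_eq n m k A _ j (Ordinal Hrj)) //.
  rewrite Hdyn // (@mvB_in n m k B _ j (Ordinal Hrj) kinc hB); first ring.
  rewrite /= prednK //; have := kinc j (ltn_ord j); lia.
split => //; split => //.
rewrite J_C /Ccost; congr (_ + _); apply: eq_big_nat => t Ht.
  by rewrite HXf //; lia.
by congr (g t _); apply: functional_extensionality => j; apply: HU; lia.
Qed.

Theorem lemma1 (n m N : nat) (k : nat -> nat)
    (A : 'I_n -> 'I_n -> R) (B : 'I_n -> 'I_m -> R)
    (f : nat -> ('I_n -> R) -> R) (g : nat -> ('I_m -> R) -> R)
    (mu lf lg thbar xibar : R)
    (theta : nat -> 'I_n -> R) (xi : nat -> 'I_m -> R) :
  @canonical_form n m k A B ->
  0 < mu -> 0 < lf -> 0 < lg ->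
  (forall t, (t <= N)%N -> strongly_convex mu (f t) /\ smooth lf (f t)) ->
  (forall t, (t < N)%N -> convex (g t) /\ smooth lg (g t)) ->
  (forall t, (t <= N)%N ->
      (forall x, f t (theta t) <= f t x) /\ vnorm (theta t) <= thbar) ->
  (forall t, (t < N)%N ->
      (forall v, g t (xi t) <= g t v) /\ vnorm (xi t) <= xibar) ->
  let p := ctrl_index m k in
  let C := @Ccost n m N k A f g in
  (* (i) *)
  (strongly_convex mu C /\
   (forall nM, is_opnorm (@MIA n m k A) nM ->
      smooth (INR p * lf + (INR p + 1) * lg * nM ^ 2) C)) /\
  (* (ii) forward *)
  (forall (x : nat -> 'I_n -> R) (u : nat -> 'I_m -> R),
      (forall r, x 0%N r = 0) ->
      (forall t, (t < N)%N -> forall r, x t.+1 r = mv A (x t) r + mv B (u t) r) ->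
      let z := @zI n m N k x in
      (forall t, (t <= N)%N -> forall r, @xz n m N k z t r = x t r) /\
      (forall t, (t < N)%N -> forall j, @uz n m N k A z t j = u t j) /\
      C z = @Jcost n m N f g x u) /\
  (* (ii) converse *)
  (forall z : 'I_N * 'I_m -> R,
      (forall r, @xz n m N k z 0%N r = 0) /\
      (forall t, (t < N)%N -> forall r,
          @xz n m N k z t.+1 r = mv A (@xz n m N k z t) r + mv B (@uz n m N k A z t) r) /\
      @Jcost n m N f g (@xz n m N k z) (@uz n m N k A z) = C z) /\
  (* (iii) *)
  (forall t, (t < N)%N -> forall z z' : 'I_N * 'I_m -> R,
      (forall tau j, (t.+1 <= tau + p)%N -> (tau <= t.+1)%N ->
          zval z tau j = zval z' tau j) ->
      f t (@xz n m N k z t) + g t (@uz n m N k A z t) = f t (@xz n m N k z' t) + g t (@uz n m N k A z' t)).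

Proof.
move=> CF mu0 lf0 lg0 Hf Hg _ _ p C.
have CF' := CF; case: CF' => k0 kinc km hA hB.
split; [split|split; [|split]].
- apply: C_sconvex => //.
    by move=> t Ht; case: (Hf t Ht).
  by move=> t Ht; case: (Hg t Ht).
- move=> nM Hop; apply: C_smooth => //.
    by move=> t Ht; case: (Hf t Ht).
  by move=> t Ht; case: (Hg t Ht).
- exact: part2f.
- exact: part2c.
- exact: part3.
Qed.
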